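(* Let $d\geq 4$ be an integer and let $\mathcal{X}\subset\mathbb{R}^{d+1}$ be the set of all vectors obtained by permuting the coordinates of $(1,1,-1,0,\dots,0)^T\in\mathbb{R}^{d+1}$. Then $\mathcal{X}$ lies in the affine hyperplane $\{x\in\mathbb{R}^{d+1}\colon x_1+\dots+x_{d+1}=1\}$ (which is isometric to $\mathbb{R}^d$), and, viewed as a subset of $\mathbb{R}^d$ via this isometry, $\mathcal{X}$ is a $5$-distance set with exactly $(d-1)\binom{d+1}{2}$ elements.
   Context: For a finite set $\mathcal{X}$ of distinct vectors in a Euclidean space, $\mathcal{X}$ is called an $s$-distance set if the set of Euclidean distances between distinct elements of $\mathcal{X}$ has exactly $s$ elements. *)

(* Defs.v *)
From HB Require Import structures.
From mathcomp Require Import all_boot all_order fingroup perm all_algebra.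
From mathcomp Require Import reals.
Set Implicit Arguments. Unset Strict Implicit. Unset Printing Implicit Defensive.
Import Order.TTheory GRing.Theory Num.Theory.
Local Open Scope ring_scope.

Definition edist (R : realType) (n : nat) (x y : 'rV[R]_n) : R :=
  Num.sqrt (\sum_(i < n) (x 0 i - y 0 i) ^+ 2).

Definition base_vec (R : realType) (d : nat) : 'rV[R]_(d.+1) :=
  \row_(i < d.+1)
    (if (i : nat) == 0%N then 1
     else if (i : nat) == 1%N then 1
     else if (i : nat) == 2%N then -1 else 0).

Definition Xvecs (R : realType) (d : nat) : seq 'rV[R]_(d.+1) :=
  undup [seq col_perm s (base_vec R d) | s <- enum [set: 'S_(d.+1)]].

Definition dist_set (R : realType) (n : nat) (X : seq 'rV[R]_n) : seq R :=
  undup [seq edist p.1 p.2 | p <- [seq (x, y) | x <- X, y <- X] & p.1 != p.2].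

(* Main.v *)
Require Import Defs.
From HB Require Import structures.
From mathcomp Require Import all_boot all_order fingroup perm all_algebra.
From mathcomp Require Import reals ring lra zify.
Import Order.TTheory GRing.Theory Num.Theory.
Local Open Scope ring_scope.
Set Implicit Arguments. Unset Strict Implicit.

Definition vecAC (R : realType) n (A : {set 'I_n}) (c : 'I_n) : 'rV[R]_n :=
  \row_j ((j \in A)%:R - (j == c)%:R).

Definition oo d (k : nat) : 'I_d.+1 := inord k.

Lemma ooE d k (i : 'I_d.+1) : (k <= d)%N -> (i == oo d k) = (val i == k).
Proof. by move=> hk; rewrite -val_eqE /= /oo inordK. Qed.

Lemma ooD d i j : (i <= d)%N -> (j <= d)%N -> i != j -> oo d i != oo d j.
Proof. by move=> hi hj; apply: contra => /eqP/(congr1 val); rewrite /= /oo !inordK // => ->. Qed.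

Lemma perm3 n (a b c u v w : 'I_n) : a != b -> a != c -> b != c ->
  u != v -> u != w -> v != w ->
  exists s : 'S_n, [/\ s a = u, s b = v & s c = w].
Proof.
move=> ab ac bc uv uw vw.
set t1 := tperm a u. set t2 := tperm (t1 b) v. set t3 := tperm (t2 (t1 c)) w.
exists (t1 * t2 * t3)%g; rewrite !permM.
have h1 : t1 a = u by rewrite tpermL.
have vu : v != u by rewrite eq_sym.
have wu : w != u by rewrite eq_sym.
have wv : w != v by rewrite eq_sym.
have n1 : t1 b != u by rewrite -h1 (inj_eq perm_inj) eq_sym.
have n2 : t2 (t1 c) != u.
  apply/eqP => h; move: ac; rewrite -(inj_eq (@perm_inj _ t1)) -(inj_eq (@perm_inj _ t2)).
  by rewrite h h1 (tpermD n1 vu) eqxx.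
have n3 : t2 (t1 c) != v.
  apply/eqP => h; move: bc; rewrite -(inj_eq (@perm_inj _ t1)) -(inj_eq (@perm_inj _ t2)).
  by rewrite h tpermL eqxx.
split.
- by rewrite h1 (tpermD n1 vu) (tpermD n2 wu).
- by rewrite tpermL (tpermD n3 wv).
- by rewrite tpermL.
Qed.

Lemma colperm_vec (R : realType) d (s : 'S_d.+1) a b c :
  (2 <= d)%N -> s a = oo d 0 -> s b = oo d 1 -> s c = oo d 2 ->
  col_perm s (base_vec R d) = vecAC R [set a; b] c.
Proof.
move=> hd ha hb hc; apply/rowP => j; rewrite /col_perm !mxE !inE.
rewrite -(inj_eq (@perm_inj _ s) j a) -(inj_eq (@perm_inj _ s) j b).
rewrite -(inj_eq (@perm_inj _ s) j c) ha hb hc !ooE //; try exact: ltnW.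
case: (s j) => [[|[|[|i]]] hi] /=; rewrite ?subr0 ?sub0r //.
Qed.

Lemma memX (R : realType) d (x : 'rV[R]_d.+1) : (2 <= d)%N ->
  x \in Xvecs R d <-> exists (A : {set 'I_d.+1}) (c : 'I_d.+1), [/\ #|A| = 2%N, c \notin A & x = vecAC R A c].
Proof.
move=> hd; have hd1 : (1 <= d)%N by apply: ltnW.
have o01 : oo d 0 != oo d 1 by apply: ooD.
have o02 : oo d 0 != oo d 2 by apply: ooD.
have o12 : oo d 1 != oo d 2 by apply: ooD.
rewrite /Xvecs mem_undup; split.
- case/mapP => s _ ->.
  exists [set s^-1%g (oo d 0); s^-1%g (oo d 1)], (s^-1%g (oo d 2)).
  split.
  + by rewrite cards2 (inj_eq perm_inj) o01.
  + by rewrite !inE !(inj_eq perm_inj) negb_or eq_sym o02 eq_sym o12.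
  + by apply: colperm_vec; rewrite // permKV.
- case=> A [c [/eqP/cards2P [a [b [ab ->]]] cA ->]].
  move: cA; rewrite !inE negb_or => /andP [ca cb].
  rewrite eq_sym in ca; rewrite eq_sym in cb.
  have [s [sa sb sc]] := perm3 ab ca cb o01 o02 o12.
  apply/mapP; exists s; first by rewrite mem_enum inE.
  by rewrite (colperm_vec R hd sa sb sc).
Qed.

Lemma sumI (R : realType) n (A : {set 'I_n}) : \sum_j ((j \in A)%:R : R) = #|A|%:R.
Proof.
transitivity (\sum_(j in A) (1 : R)); last by rewrite sumr_const.
by rewrite [RHS]big_mkcond; apply: eq_bigr => j _; case: (j \in A).
Qed.

Lemma sumdl (R : realType) n (e : 'I_n) (f : 'I_n -> R) :
  \sum_j (j == e)%:R * f j = f e.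
Proof.
rewrite (bigD1 e) //= eqxx mul1r big1 ?addr0 // => j /negbTE ->.
by rewrite mul0r.
Qed.

Lemma sumdr (R : realType) n (e : 'I_n) (f : 'I_n -> R) :
  \sum_j f j * (j == e)%:R = f e.
Proof. by rewrite -(sumdl e f); apply: eq_bigr => j _; rewrite mulrC. Qed.

Lemma sumd1 (R : realType) n (e : 'I_n) : \sum_j ((j == e)%:R : R) = 1.
Proof. by rewrite (eq_bigr (fun j => (j == e)%:R * 1)) ?(sumdl e (fun _ => 1)) // => j _; rewrite mulr1. Qed.

Lemma sumAB (R : realType) n (A B : {set 'I_n}) :
  \sum_j ((j \in A)%:R * (j \in B)%:R : R) = #|A :&: B|%:R.
Proof.
rewrite -sumI; apply: eq_bigr => j _; rewrite inE.
by case: (j \in A); case: (j \in B); rewrite ?mulr1 ?mulr0.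
Qed.

Lemma key4 (R : realType) : forall (p q r s : bool), ~~ (p && q) -> ~~ (r && s) ->
  ((p%:R - q%:R) - (r%:R - s%:R)) ^+ 2 = p%:R + q%:R + r%:R + s%:R -
    2 * (p%:R * r%:R - p%:R * s%:R - q%:R * r%:R + q%:R * s%:R) :> R.
Proof. case; case; case; case => //= _ _. all: rewrite ?mulr1n ?mulr0n. all: ring. Qed.

Definition sqd (R : realType) n (x y : 'rV[R]_n) := \sum_(i < n) (x 0 i - y 0 i) ^+ 2.

Lemma sqd_formula (R : realType) n (A B : {set 'I_n}) c e :
  #|A| = 2%N -> #|B| = 2%N -> c \notin A -> e \notin B ->
  sqd (vecAC R A c) (vecAC R B e) =
  6 - 2 * (#|A :&: B|%:R - (e \in A)%:R - (c \in B)%:R + (c == e)%:R).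
Proof.
move=> hA hB cA eB.

have E : forall j, ((vecAC R A c) 0 j - (vecAC R B e) 0 j) ^+ 2 =
   (j \in A)%:R + (j == c)%:R + (j \in B)%:R + (j == e)%:R -
    2 * ((j \in A)%:R * (j \in B)%:R - (j \in A)%:R * (j == e)%:R
         - (j == c)%:R * (j \in B)%:R + (j == c)%:R * (j == e)%:R).
  move=> j; rewrite !mxE; apply: key4.
    by apply/negP => /andP [jA /eqP jc]; move: cA; rewrite -jc jA.
  by apply/negP => /andP [jA /eqP jc]; move: eB; rewrite -jc jA.
rewrite /sqd (eq_bigr _ (fun j _ => E j)).
rewrite sumrB -mulr_sumr !big_split /= !sumrN sumAB sumdr sumdl sumdr !sumI hA hB !sumd1 (eq_sym e c); ring.
Qed.

Lemma vecAC_E (R : realType) n (A : {set 'I_n}) c j : c \notin A ->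
  (vecAC R A c) 0 j = if j \in A then 1 else if j == c then -1 else 0.
Proof.
move=> cA; rewrite mxE; case: ifP => jA.
  by case: eqP => [jc|_]; [move: cA; rewrite -jc jA | rewrite /= ?mulr0n ?mulr1n subr0].
by case: eqP => _ /=; rewrite ?mulr0n ?mulr1n; ring.
Qed.

Lemma vecAC_inj (R : realType) n (A B : {set 'I_n}) c e :
  c \notin A -> e \notin B -> vecAC R A c = vecAC R B e -> A = B /\ c = e.
Proof.
move=> cA eB H; have Hj := fun j => congr1 (fun x : 'rV[R]_n => x 0 j) H.
have n10 : (1 : R) <> 0 by lra.
have n1m : (1 : R) <> -1 by lra.
have nm0 : (-1 : R) <> 0 by lra.
have AB : A = B.
apply/setP => j; move: (Hj j) => /=; rewrite !vecAC_E //.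
  by case: (j \in A); case: (j \in B) => //; case: (j == c); case: (j == e) => // h; exfalso; clear -h; lra.
split => //.
move: (Hj c) => /=; rewrite !vecAC_E // (negbTE cA) eqxx.
case: (c \in B) => [h|]; first by exfalso; clear -h; lra.
case: eqP => // _ h; exfalso; clear -h; lra.
Qed.

Lemma tcase (m : nat) (p q r : bool) : (m <= 2)%N -> ~~ ((m == 2)%N && r) ->
  (6 + 2 * (p + q) - 2 * (m + r))%N \in [:: 2; 4; 6; 8; 10]%N.
Proof. by case: m => [|[|[|m]]] //; case: p; case: q; case: r. Qed.

Lemma bound (R : realType) n (A B : {set 'I_n}) c e :
  #|A| = 2%N -> #|B| = 2%N -> c \notin A -> e \notin B ->
  vecAC R A c != vecAC R B e ->
  exists2 t, t \in [:: 2; 4; 6; 8; 10]%N & sqd (vecAC R A c) (vecAC R B e) = t%:R.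
Proof.
move=> hA hB cA eB ne.
have hm : (#|A :&: B| <= 2)%N by rewrite -hA subset_leq_card // subsetIl.
have hmr : ~~ ((#|A :&: B| == 2)%N && (c == e)).
  apply/negP => /andP [/eqP m2 /eqP ce]; move/negP: ne; apply.
  have e1 : A :&: B == A by rewrite eqEcard subsetIl m2 hA.
  have e2 : A :&: B == B by rewrite eqEcard subsetIr m2 hB.
  by rewrite -(eqP e1) (eqP e2) ce.
exists (6 + 2 * ((e \in A) + (c \in B)) - 2 * (#|A :&: B| + (c == e)))%N.
  exact: tcase.
rewrite sqd_formula // natrB; last first.
  by move: hm; case: (c == e); case: (#|A :&: B|) => [|[|[|]]].
rewrite !natrD; ring.
Qed.

Lemma cardP d : #|[set p : {set 'I_d.+1} * 'I_d.+1 | (#|p.1| == 2) && (p.2 \notin p.1)]|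
  = ((d - 1) * 'C(d.+1, 2))%N.
Proof.
transitivity (\sum_(A : {set 'I_d.+1}) \sum_(c : 'I_d.+1)
   (if (#|A| == 2) && (c \notin A) then 1 else 0))%N.
  rewrite pair_big /= -sum1_card big_mkcond; apply: eq_bigr => p _.
  by rewrite inE.
transitivity (\sum_(A : {set 'I_d.+1} | #|A| == 2) (d - 1))%N.
  rewrite [RHS]big_mkcond; apply: eq_bigr => A _.
  case: eqP => hA /=; last by rewrite big1.
  rewrite -big_mkcond sum1_card.
  have := cardC A; rewrite hA card_ord => h.
  have -> : #|(fun i => i \notin A)| = #|[predC A]| by apply: eq_card.
  move: h; lia.
rewrite sum_nat_const mulnC.
have -> : #|[pred A : {set 'I_d.+1} | #|A| == 2]| = #|[set A : {set 'I_d.+1} | #|A| == 2]|.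
  by apply: eq_card => A; rewrite inE.
by rewrite card_draws card_ord.
Qed.

Lemma sizeX (R : realType) d : (2 <= d)%N ->
  size (Xvecs R d) = ((d - 1) * 'C(d.+1, 2))%N.
Proof.
move=> hd.
set P := [set p : {set 'I_d.+1} * 'I_d.+1 | (#|p.1| == 2) && (p.2 \notin p.1)].
rewrite -cardP -/P cardE.
rewrite -(size_map (fun p => vecAC R p.1 p.2)).
apply: perm_size; apply: uniq_perm.
- exact: undup_uniq.
- rewrite map_inj_in_uniq ?enum_uniq // => [[A c] [B e]].
  rewrite !mem_enum !inE /= => /andP [_ cA] /andP [_ eB] h.
  by have [-> ->] := vecAC_inj cA eB h.
move=> x; apply/idP/idP.
  case/(memX x hd) => A [c [hA cA ->]]; apply/mapP; exists (A, c) => //.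
  by rewrite mem_enum inE /= hA eqxx cA.
case/mapP => [[A c]]; rewrite mem_enum inE /= => /andP [/eqP hA cA] ->.
by apply/(memX _ hd); exists A, c.
Qed.

Lemma sumX (R : realType) d x : (2 <= d)%N -> x \in Xvecs R d ->
  \sum_(i < d.+1) x 0 i = 1.
Proof.
move=> hd /(memX x hd) [A [c [hA cA ->]]].
rewrite (eq_bigr (fun i => (i \in A)%:R - (i == c)%:R)); last by move=> i _; rewrite mxE.
rewrite sumrB sumI sumd1 hA; ring.
Qed.

Lemma cardI2R (R : realType) n (a b : 'I_n) (B : {set 'I_n}) : a != b ->
  (#|[set a; b] :&: B|%:R : R) = (a \in B)%:R + (b \in B)%:R.
Proof.
move=> ab; rewrite -sumAB.
rewrite (eq_bigr (fun j => (j == a)%:R * (j \in B)%:R + (j == b)%:R * (j \in B)%:R)).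
  by rewrite big_split /= !sumdl.
move=> j _; rewrite !inE.
have [->|ja] := eqVneq j a; first by rewrite (negbTE ab) /= ?mulr1n ?mulr0n; ring.
case: (j == b); rewrite /= ?mulr1n ?mulr0n; ring.
Qed.

Definition Tlist (R : realType) : seq R := [seq Num.sqrt (t%:R : R) | t <- [:: 2; 4; 6; 8; 10]%N].

Lemma Tlist_uniq (R : realType) : uniq (Tlist R).
Proof.
rewrite /Tlist map_inj_in_uniq // => s t _ _ /eqP.
by rewrite eqr_sqrt ?ler0n // eqr_nat => /eqP.
Qed.

Lemma realize (R : realType) d t : (4 <= d)%N -> t \in [:: 2; 4; 6; 8; 10]%N ->
  exists x y, [/\ x \in Xvecs R d, y \in Xvecs R d & sqd x y = t%:R].
Proof.
move=> hd ht.
have hd2 : (2 <= d)%N by apply: leq_trans hd.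
have F : forall i j, (i <= 4)%N -> (j <= 4)%N -> (oo d i == oo d j) = (i == j)%N.
  move=> i j hi hj; rewrite ooE; last lia.
  rewrite /oo /= inordK //; lia.
have M : forall i j k, (i <= 4)%N -> (j <= 4)%N -> (k <= 4)%N ->
    (i != j)%N -> (k != i)%N -> (k != j)%N ->
    vecAC R [set oo d i; oo d j] (oo d k) \in Xvecs R d.
  move=> i j k hi hj hk ij ki kj; apply/(memX _ hd2).
  exists [set oo d i; oo d j], (oo d k); split => //.
    by rewrite cards2 F // ij.
  by rewrite !inE !F // negb_or ki kj.
have S : forall i j k i' j' k', (i <= 4)%N -> (j <= 4)%N -> (k <= 4)%N ->
    (i' <= 4)%N -> (j' <= 4)%N -> (k' <= 4)%N ->
    (i != j)%N -> (k != i)%N -> (k != j)%N ->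
    (i' != j')%N -> (k' != i')%N -> (k' != j')%N ->
    sqd (vecAC R [set oo d i; oo d j] (oo d k)) (vecAC R [set oo d i'; oo d j'] (oo d k')) =
    6 - 2 * (((oo d i \in [set oo d i'; oo d j'])%:R + (oo d j \in [set oo d i'; oo d j'])%:R)
      - (oo d k' \in [set oo d i; oo d j])%:R - (oo d k \in [set oo d i'; oo d j'])%:R
      + (oo d k == oo d k')%:R).
  move=> i j k i' j' k' hi hj hk hi' hj' hk' ij ki kj ij' ki' kj'.
  rewrite sqd_formula ?cardI2R ?F //.
  - by rewrite cards2 F // ij.
  - by rewrite cards2 F // ij'.
  - by rewrite !inE !F // negb_or ki kj.
  - by rewrite !inE !F // negb_or ki' kj'.
move: ht; rewrite !inE => /or4P [/eqP ->|/eqP ->|/eqP ->|/orP [/eqP ->|/eqP ->]].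
- exists (vecAC R [set oo d 0; oo d 1] (oo d 2)), (vecAC R [set oo d 0; oo d 3] (oo d 2)).
  split; [exact: M | exact: M | rewrite S // !inE !F //= ?mulr1n ?mulr0n; ring].
- exists (vecAC R [set oo d 0; oo d 1] (oo d 2)), (vecAC R [set oo d 3; oo d 4] (oo d 2)).
  split; [exact: M | exact: M | rewrite S // !inE !F //= ?mulr1n ?mulr0n; ring].
- exists (vecAC R [set oo d 0; oo d 1] (oo d 2)), (vecAC R [set oo d 0; oo d 3] (oo d 1)).
  split; [exact: M | exact: M | rewrite S // !inE !F //= ?mulr1n ?mulr0n; ring].
- exists (vecAC R [set oo d 0; oo d 1] (oo d 2)), (vecAC R [set oo d 3; oo d 4] (oo d 0)).
  split; [exact: M | exact: M | rewrite S // !inE !F //= ?mulr1n ?mulr0n; ring].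
- exists (vecAC R [set oo d 0; oo d 1] (oo d 2)), (vecAC R [set oo d 2; oo d 3] (oo d 0)).
  split; [exact: M | exact: M | rewrite S // !inE !F //= ?mulr1n ?mulr0n; ring].
Qed.

Theorem lemma2p2 (R : realType) (d : nat) (hd : (4 <= d)%N) :
  (forall x, x \in Xvecs R d -> \sum_(i < d.+1) x 0 i = 1)
  /\ size (dist_set (Xvecs R d)) = 5%N
  /\ size (Xvecs R d) = ((d - 1) * 'C(d.+1, 2))%N.
Proof.
have hd2 : (2 <= d)%N by apply: leq_trans hd.
split; first by move=> x; apply: sumX.
split; last exact: sizeX.
have -> : 5%N = size (Tlist R) by [].
apply: perm_size; apply: uniq_perm; first exact: undup_uniq.
  exact: Tlist_uniq.
move=> z; rewrite /dist_set mem_undup; apply/idP/idP.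
  case/mapP => p; rewrite mem_filter => /andP [ne /allpairsP [[x y] [hx hy pE]]] ->.
  rewrite pE /= in ne *.
  move/(memX x hd2): hx => [A [c [hA cA xE]]].
  move/(memX y hd2): hy => [B [e [hB eB yE]]].
  rewrite xE yE in ne *.
  have [t ht st] := bound hA hB cA eB ne.
  have -> : edist (vecAC R A c) (vecAC R B e) = Num.sqrt (sqd (vecAC R A c) (vecAC R B e)) by [].
  by rewrite st; apply/mapP; exists t.
case/mapP => t ht ->.
have [x [y [hx hy hs]]] := realize R hd ht.
have ne : x != y.
  apply/eqP => exy; move: hs; rewrite exy /sqd big1 => [|i _]; last by rewrite subrr expr0n.
  by move/eqP; rewrite eq_sym pnatr_eq0; move: ht; rewrite !inE => /or4P [|||/orP []] /eqP ->.
apply/mapP; exists (x, y); last by rewrite /edist -/(sqd x y) hs.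
by rewrite mem_filter /= ne; apply: allpairs_f.
Qed.
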